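(* Let $p_1,\dots,p_n$ be $n$ distinct prime numbers, let $X$ be a set with $|X|=p_1\cdots p_n$, and let $G$ be a solvable transitive subgroup of $\mathrm{Sym}_X$. Then there exist $\sigma\in\mathrm{Sym}_n$ and normal subgroups $$\{1\}=K_0\subseteq T_1\subseteq K_1\subseteq T_2\subseteq K_2\subseteq\cdots\subseteq T_n\subseteq K_n=G$$ of $G$ such that for every $i=1,\dots,n$: (i) $K_i/K_{i-1}$ is isomorphic to a subgroup of $\left(\mathbb Z/(p_{\sigma(i)})\rtimes \mathrm{Aut}(\mathbb Z/(p_{\sigma(i)}))\right)^{m_i}$ with $m_i=\frac{p_1\cdots p_n}{p_{\sigma(1)}\cdots p_{\sigma(i)}}$, $p_{\sigma(i)}$ divides $|K_i/K_{i-1}|$, and $T_i/K_{i-1}$ is the Sylow $p_{\sigma(i)}$-subgroup of $K_i/K_{i-1}$; (ii) $K_i=\{g\in G : g(T_i(x))=T_i(x)\text{ for all }x\in X\}$, where $T_i(x)=\{t(x): t\in T_i\}$; (iii) $\mathcal S_i=\{K_i(x): x\in X\}$ (where $K_i(x)=\{g(x):g\in K_i\}$) is a system of imprimitivity of $G$ and $|\mathcal S_i|=\frac{p_1\cdots p_n}{p_{\sigma(1)}\cdots p_{\sigma(i)}}$.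
   Context: Here $\mathbb Z/(p)\rtimes\mathrm{Aut}(\mathbb Z/(p))$ is the holomorph of the cyclic group of order $p$ (the semidirect product with the natural action), and a power $H^m$ denotes the direct product of $m$ copies of $H$. A system of imprimitivity of a permutation group $G\le\mathrm{Sym}_X$ is a partition of $X$ into blocks such that each element of $G$ maps every block onto a block. *)

(* Defs.v *)
From HB Require Import structures.
From mathcomp Require Import all_boot all_algebra all_fingroup all_solvable.
Set Implicit Arguments. Unset Strict Implicit. Unset Printing Implicit Defensive.

Definition holomorph (p : nat) : finGroupType :=
  sdprod_by (aut_groupAction (Zp p)).

Definition gpower (H : finGroupType) (m : nat) : finGroupType :=
  {dffun forall i : 'I_m, H}.

Definition porb (X : finType) (A : {set {perm X}}) (x : X) : {set X} :=
  [set fun_of_perm a x | a in A].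

Definition pimage (X : finType) (g : {perm X}) (B : {set X}) : {set X} :=
  [set fun_of_perm g y | y in B].

Definition system_of_imprimitivity (X : finType) (G : {set {perm X}})
    (S : {set {set X}}) : bool :=
  partition S [set: X] && [forall g in G, forall B in S, pimage g B \in S].

Definition porbs (X : finType) (A : {set {perm X}}) : {set {set X}} :=
  [set porb A x | x in [set: X]].

(* Main.v *)
Require Import Defs.
From mathcomp Require Import all_boot all_algebra all_fingroup all_solvable.
Set Implicit Arguments. Unset Strict Implicit. Unset Printing Implicit Defensive.
Local Open Scope group_scope.

Section NatPart.
Local Close Scope group_scope.

Section Primes.
Variables (n : nat) (p : 'I_n -> nat).
Hypotheses (p_prime : forall i, prime (p i)) (p_inj : injective p).

Lemma prodp_gt0 : 0 < \prod_(i < n) p i.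
Proof. by apply: prodn_gt0 => i; apply: prime_gt0. Qed.

Lemma logn_prodp r : prime r -> logn r (\prod_(i < n) p i) <= 1.
Proof.
move=> r_pr.
have : 0 < \prod_(i < n) p i /\ logn r (\prod_(i < n) p i) = \sum_(i < n) (r == p i).
  apply: (big_rec2 (fun a b => 0 < a /\ logn r a = b)); first by rewrite logn1.
  move=> i a b _ [a0 <-]; split; first by rewrite muln_gt0 prime_gt0.
  rewrite lognM //; last exact: prime_gt0.
  by rewrite (logn_prime r (p_prime i)).
case=> _ ->.
case: (pickP (fun i => p i == r)) => [i0 /eqP pi0|none].
  rewrite (bigD1 i0) //= big1 ?addn0 ?leq_b1 // => i ne.
  have : r != p i by rewrite -pi0; apply: contra ne => /eqP e; apply/eqP; apply: p_inj.
  by move/negbTE ->.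
by rewrite big1 // => i _; rewrite eq_sym none.
Qed.

Lemma sqfree_prodp r : prime r -> ~~ (r ^ 2 %| \prod_(i < n) p i).
Proof.
move=> r_pr; rewrite pfactor_dvdn ?prodp_gt0 // -ltnNge ltnS.
exact: logn_prodp.
Qed.

Lemma prime_dvd_prodp q : prime q -> q %| \prod_(i < n) p i -> exists k, q = p k.
Proof.
move=> q_pr; rewrite Euclid_dvd_prod //.
elim/big_rec: _ => [//|i b _ IH]; case/orP => [|/IH //].
by rewrite dvdn_prime2 // => /eqP ->; exists i.
Qed.

End Primes.


Lemma prod_lt (n : nat) (p : 'I_n -> nat) (p_prime : forall i, prime (p i))
    (i : nat) (s : nat -> 'I_n) :
  i < n -> (forall j1 j2, j1 < i -> j2 < i -> s j1 = s j2 -> j1 = j2) ->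
  \prod_(l < i) p (s l) < \prod_(k < n) p k.
Proof.
move=> lt_in sinj.
pose S := [set s (val l) | l in [set: 'I_i]].
have injS : {in [set: 'I_i] &, injective (fun l : 'I_i => s (val l))}.
  by move=> a b _ _ e; apply: val_inj; exact: sinj (ltn_ord a) (ltn_ord b) e.
have cS : #|S| = i by rewrite card_in_imset // cardsT card_ord.
have eS : \prod_(l < i) p (s l) = \prod_(k in S) p k.
  by rewrite big_imset //=; apply: eq_bigl => l; rewrite inE.
have [k0 k0S] : exists k0, k0 \in ~: S.
  apply/card_gt0P; have := cardsC S; rewrite card_ord cS => e.
  by rewrite -(ltn_add2l i) addn0 e.
rewrite (bigID (mem S)) /= eS -[X in X < _]muln1 ltn_pmul2l; last first.
  by apply: prodn_gt0 => k; apply: prime_gt0.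
rewrite (bigD1 k0) //=; last by rewrite inE in k0S.
apply: leq_trans (prime_gt1 (p_prime k0)) _; apply: leq_pmulr.
by apply: prodn_gt0 => k; apply: prime_gt0.
Qed.



End NatPart.


Section HolEmbed.
Variables (Y : finType) (q : nat) (Om : {set Y}) (W C : {group {perm Y}}) (w0 : Y).
Hypotheses (q_pr : prime q) (cardOm : #|Om| = q) (Omw0 : w0 \in Om)
  (Won : forall w, w \in W -> perm_on Om w) (sCW : C \subset W) (nCW : W \subset 'N(C))
  (cCC : abelian C) (orbC : orbit 'P C w0 = Om).

Lemma he_fix1 u : u \in W -> (forall c, c \in C -> commute c u) -> u w0 = w0 -> u = 1.
Proof.
move=> Wu cu uw0; apply/permP => y; rewrite perm1.
case: (boolP (y \in Om)) => [|yOm]; last exact: out_perm (Won Wu) yOm.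
rewrite -orbC => /orbitP[c Cc <-] /=.
by rewrite -permM cu // permM uw0.
Qed.

Let S := 'C_W[w0 | 'P].

Lemma he_tiCS : C :&: S = 1.
Proof.
apply/eqP; rewrite eqEsubset sub1G andbT; apply/subsetP => c /setIP[Cc].
move=> /setIP[_] /astab1P /= cw0.
apply/set1P; apply: (he_fix1 (subsetP sCW _ Cc) _ cw0) => d Cd.
exact: (centsP cCC).
Qed.

Lemma he_cardC : #|C| = q.
Proof.
rewrite -cardOm -orbC card_orbit.
have ->: 'C_C[w0 | 'P] = 1.
  apply/eqP; rewrite eqEsubset sub1G andbT -he_tiCS.
  apply/subsetP => c /setIP[Cc cw]; apply/setIP; split => //.
  by apply/setIP; split => //; apply: (subsetP sCW).
by rewrite indexg1.
Qed.

Lemma he_sdprod : C ><| S = W.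
Proof.
have nCS : S \subset 'N(C) by rewrite subIset ?nCW.
rewrite sdprodE ?he_tiCS //; apply/eqP; rewrite eqEsubset.
rewrite mul_subG ?sCW ?subsetIl //=.
rewrite -(normC nCS); apply/subsetP => w Ww.
have: w w0 \in orbit 'P C w0 by rewrite orbC (perm_closed _ (Won Ww)).
case/orbitP => c Cc /= cw.
rewrite -(mulgKV c w); apply: mem_mulg; last exact: Cc.
apply/setIP; split; first by rewrite groupM ?groupV ?(subsetP sCW c Cc).
apply/astab1P; rewrite /= /aperm permM -cw /aperm -permM mulgV perm1.
by [].
Qed.


Lemma he_main : exists L : {group holomorph q}, W \isog L.
Proof.
have q_gt0 := prime_gt0 q_pr.
have [f injf imf] : exists2 f : {morphism C >-> 'Z_q}, 'injm f & f @* C = Zp q.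
  apply/isogP; rewrite isog_cyclic_card; last by apply: prime_cyclic; rewrite he_cardC.
  by apply/andP; split; [apply: prime_cyclic; rewrite card_Zp | rewrite card_Zp // he_cardC].
set to := aut_groupAction (Zp q).
have fCZ c : c \in C -> f c \in Zp q by move=> Cc; rewrite -imf mem_morphim.
pose fH c := sdpair1 to (f c).
have fHM : {in C &, {morph fH : x y / x * y}}.
  by move=> x y Cx Cy; rewrite /fH morphM // sdpair1_morphM ?fCZ.
pose fHm := Morphism fHM.
pose al s := Aut_isom injf (subxx C) (conj_aut C s).
have caut s : s \in 'N(C) -> conj_aut C s \in Aut C.
  by move=> Ns; apply: (subsetP (Aut_conj_aut C 'N(C))); rewrite mem_morphim.
have alA s : al s \in Aut (Zp q) by rewrite -imf; exact: Aut_Aut_isom.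
pose fK s := sdpair2 to (al s).
have nCS : S \subset 'N(C) by rewrite subIset ?nCW.
have fKM : {in S &, {morph fK : x y / x * y}}.
  move=> x y Sx Sy; have Nx := subsetP nCS x Sx; have Ny := subsetP nCS y Sy.
  by rewrite /fK /al morphM // Aut_isomM ?caut // sdpair2_morphM ?alA.
pose fKm := Morphism fKM.
have actf : {in C & S, morph_act 'J 'J fHm fKm}.
  move=> c s Cc Ss /=; have Ns := subsetP nCS s Ss.
  rewrite /fH /fK -sdpair_act ?fCZ ?alA //; congr (sdpair1 to _).
  transitivity (al s (f c)); last by [].
  by rewrite /al Aut_isomE ?caut // norm_conj_autE.
have Sg : group_set S by exact: groupP.
have sdW := he_sdprod.
pose g := sdprodm sdW actf.
exists (g @* W)%G; apply: sub_isog => //.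
rewrite injm_sdprodm; apply/and3P; split.
- apply/injmP => x y Cx Cy /= e.
  by apply: (injmP injf) => //; apply: (injmP (injm_sdpair1 to)) => //; rewrite fCZ.
- apply/injmP => x y Sx Sy /= e.
  have Nx := subsetP nCS x Sx; have Ny := subsetP nCS y Sy.
  have e1 : al x = al y by apply: (injmP (injm_sdpair2 to)); rewrite ?alA.
  have e2 : conj_aut C x = conj_aut C y.
    by apply: (injmP (injm_Aut_isom injf (subxx C))); rewrite ?caut.
  have Sxy : x * y^-1 \in S by rewrite groupM ?groupV.
  have : x * y^-1 \in 'ker (conj_aut C).
    apply/kerP; rewrite ?groupM ?groupV // morphM ?groupV //.
    by rewrite morphV //= e2 mulgV.
  rewrite ker_conj_aut => /centP cxy.
  have Wxy : x * y^-1 \in W by case/setIP: Sxy.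
  have : x * y^-1 = 1.
    apply: (he_fix1 Wxy) => [c Cc|]; first by have := cxy c Cc.
    by case/setIP: Sxy => _ /astab1P.
  by move/eqP; rewrite mulg_eq1 ?groupV // => /eqP; rewrite invgK.
- apply/eqP/trivgP; rewrite -(im_sdpair_TI to); apply: setISS.
  + by apply/subsetP => u /morphimP[c _ Cc ->]; rewrite /= /fH mem_morphim ?fCZ.
  + by apply/subsetP => u /morphimP[c _ Cc ->]; rewrite /= /fK mem_morphim ?alA.
Qed.

End HolEmbed.



Lemma card_hol q : prime q -> #|[set: holomorph q]| = (q * q.-1)%N.
Proof.
move=> q_pr; set to := aut_groupAction (Zp q).
rewrite -(sdprod_card (sdprod_sdpair to)) !card_injm ?injm_sdpair1 ?injm_sdpair2 //.
rewrite card_Aut_cyclic ?prime_cyclic ?card_Zp ?prime_gt0 //.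
by rewrite totient_prime.
Qed.

Lemma gpower_sylow q m (L : {group gpower (holomorph q) m}) :
  prime q -> q.-Sylow(L) ('O_q(L)).
Proof.
move=> q_pr; set to := aut_groupAction (Zp q).
have q_gt0 := prime_gt0 q_pr.
set Z1 := (sdpair1 to @* Zp q)%G.
have nZ1 : Z1 <| [set: holomorph q].
  by case/sdprod_context: (sdprod_sdpair to).
pose Z := Group (group_setXn (fun _ : 'I_m => Z1)).
have cZ1 : #|Z1| = q by rewrite card_injm ?injm_sdpair1 // card_Zp.
have cZ : #|Z| = (q ^ m)%N.
  by rewrite /= cardsXn (eq_bigr (fun _ => q)) ?prod_nat_const ?card_ord // => i _.
have cT : #|[set: gpower (holomorph q) m]| = ((q * q.-1) ^ m)%N.
  have -> : [set: gpower (holomorph q) m] = setXn (fun _ : 'I_m => [set: holomorph q]).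
    by apply/setP => u; rewrite in_setXn inE; symmetry; apply/forallP => i; rewrite inE.
  by rewrite cardsXn (eq_bigr (fun _ => (q * q.-1)%N)) ?prod_nat_const ?card_ord // => i _; rewrite card_hol.
have nZ : Z <| [set: gpower (holomorph q) m].
  rewrite /normal subsetT /=; apply/subsetP => a _; rewrite inE.
  apply/subsetP => v /imsetP[u Zu ->]; apply/setXnP => i.
  rewrite conjgE !mulg_ffun invg_ffun -conjgE memJ_norm //.
    by move/setXnP: Zu; apply.
  by rewrite (subsetP (normal_norm nZ1)) ?inE.
have hZ : q.-Hall([set: gpower (holomorph q) m]) Z.
  rewrite /pHall subsetT /pgroup cZ pnatX pnat_id //=.
  have := Lagrange (subsetT Z); rewrite cT cZ expnMn => /eqP.
  rewrite eqn_pmul2l ?expn_gt0 ?q_gt0 // => /eqP ->.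
  rewrite pnatX; apply/orP; left; rewrite p'natE //.
  apply/negP => /dvdn_leq; case: (q) q_pr => // [[]] // k _.
  by move/(_ isT); rewrite ltnn.
have hL := setI_normal_Hall nZ hZ (subsetT L).
rewrite (normal_Hall_pcore hL).
  exact: hL.
by rewrite /= setIC; apply: (normalGI (subsetT L) nZ).
Qed.



Section Orbs.
Variables (X : finType).
Implicit Types (A : {set {perm X}}) (H : {group {perm X}}) (g : {perm X}) (x : X).

Lemma porbE A x : porb A x = orbit 'P A x.
Proof. by []. Qed.

Lemma pimageE g (B : {set X}) : pimage g B = ('P^*)%act B g.
Proof. by []. Qed.

Lemma porb_refl H x : x \in porb H x.
Proof. by rewrite porbE orbit_refl. Qed.

Lemma porb_norm H g x : g \in 'N(H) -> pimage g (porb H x) = porb H (g x).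
Proof.
move=> Ng; apply/setP => y; apply/imsetP/imsetP => [[z /imsetP[h Hh ->] ->]|[h Hh ->]].
  exists (h ^ g); first by rewrite memJ_norm.
  by rewrite /conjg !permM permK.
exists ((h ^ g^-1) x); first by apply/imsetP; exists (h ^ g^-1); rewrite ?memJ_norm ?groupV.
by rewrite /conjg invgK !permM permKV.
Qed.

Lemma porb_sym H x y : y \in porb H x -> porb H y = porb H x.
Proof. by rewrite !porbE => /orbit_eqP. Qed.

Lemma porb_fix H h x : h \in H -> pimage h (porb H x) = porb H x.
Proof.
move=> Hh; rewrite porb_norm ?(subsetP (normG H)) //.
by apply: porb_sym; apply/imsetP; exists h.
Qed.

Lemma card_pimage g (B : {set X}) : #|pimage g B| = #|B|.
Proof. by rewrite card_imset //; apply: perm_inj. Qed.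

Lemma porbs_partition H : partition (porbs H) [set: X].
Proof.
have := @orbit_partition _ _ _ 'P H [set: X].
by apply; apply/actsP => a _ y; rewrite !inE.
Qed.

End Orbs.

Section GOrbs.
Variables (X : finType) (G : {group {perm X}}).
Hypothesis transG : [transitive G, on [set: X] | 'P].
Implicit Types (A : {set {perm X}}) (H K T : {group {perm X}}) (g : {perm X}) (x : X).

Lemma trans_ex x y : exists2 g, g \in G & y = g x.
Proof.
have : y \in orbit 'P G x by rewrite (atransP transG) ?inE.
by case/orbitP => g Gg <-; exists g.
Qed.

Lemma porb_card H x y : G \subset 'N(H) -> #|porb H y| = #|porb H x|.
Proof.
move=> nHG; have [g Gg ->] := trans_ex x y.
by rewrite -porb_norm ?(subsetP nHG) // card_pimage.
Qed.

Lemma card_porbs H x : G \subset 'N(H) -> (#|porbs H| * #|porb H x|)%N = #|X|.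
Proof.
move=> nHG; rewrite -cardsT (card_partition (porbs_partition H)).
rewrite -sum_nat_const; apply: eq_bigr => B /imsetP[y _ ->].
exact: porb_card.
Qed.

Lemma porbs_sys H : G \subset 'N(H) -> system_of_imprimitivity G (porbs H).
Proof.
move=> nHG; rewrite /system_of_imprimitivity porbs_partition /=.
apply/forall_inP => g Gg; apply/forall_inP => B /imsetP[y _ ->].
by rewrite porb_norm ?(subsetP nHG) //; apply: imset_f; rewrite inE.
Qed.

Definition Stab A := 'C_G(porbs A | 'P^*).

Lemma StabE H : Stab H = [set g in G | [forall x, pimage g (porb H x) == porb H x]].
Proof.
apply/setP => g; apply/setIP/setIdP => [[Gg /astabP st]|[Gg /forallP st]]; split => //.
  by apply/forallP => x; apply/eqP; rewrite pimageE st //; apply: imset_f; rewrite inE.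
by apply/astabP => B /imsetP[x _ ->]; apply/eqP; exact: st.
Qed.

Lemma Stab_normal H : G \subset 'N(H) -> Stab H <| G.
Proof.
move=> nHG; rewrite /Stab /normal subsetIl normsI ?normG //.
apply: subset_trans (astab_norm _ _); apply/subsetP => g Gg.
rewrite inE; apply/andP; split; first by rewrite inE.
rewrite inE; apply/subsetP => B /imsetP[y _ ->]; rewrite inE.
by rewrite -pimageE porb_norm ?(subsetP nHG) //; apply: imset_f; rewrite inE.
Qed.

Lemma porb_between H T x : H \subset T -> T \subset Stab H -> porb T x = porb H x.
Proof.
move=> sHT sTS; apply/eqP; rewrite eqEsubset; apply/andP; split; last first.
  by apply/subsetP => y /imsetP[h Hh ->]; apply/imsetP; exists h => //; apply: (subsetP sHT).
apply/subsetP => y /imsetP[t Tt ->].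
have : t \in Stab H := subsetP sTS t Tt.
rewrite StabE inE => /andP[_ /forallP /(_ x) /eqP <-].
by apply: imset_f; apply: porb_refl.
Qed.

Lemma porbs_between H T : H \subset T -> T \subset Stab H -> porbs T = porbs H.
Proof. by move=> sHT sTS; apply: eq_imset => x; apply: porb_between. Qed.

Lemma Stab_between H T : H \subset T -> T \subset Stab H -> Stab T = Stab H.
Proof. by move=> sHT sTS; rewrite /Stab (porbs_between sHT sTS). Qed.

Lemma sub_Stab H : H \subset G -> H \subset Stab H.
Proof.
move=> sHG; rewrite StabE; apply/subsetP => h Hh; rewrite inE (subsetP sHG) //=.
by apply/forallP => x; rewrite porb_fix.
Qed.

Canonical Stab_group A := Eval hnf in [group of Stab A].

Lemma Stab_sub A : Stab A \subset G.
Proof. exact: subsetIl. Qed.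

Lemma StabP H g x : g \in Stab H -> pimage g (porb H x) = porb H x.
Proof. by rewrite StabE inE => /andP[_ /forallP /(_ x) /eqP]. Qed.

Lemma actP_setact g (B : {set X}) : actperm ('P^*) g B = pimage g B.
Proof. by rewrite actpermE. Qed.

Section Embed.
Variables (K M : {group {perm X}}) (q m0 : nat).
Hypotheses (nKG : K <| G) (StabK : Stab K = K) (nMG : M <| G) (sKM : K \subset M)
  (derM : M^`(1) \subset K) (q_pr : prime q)
  (cardOm : forall x, #|orbit ('P^*) M (porb K x)| = q) (cardB : #|porbs M| = m0).

Let K' := Stab M.
Let sK'G : K' \subset G := Stab_sub M.
Let sMG : M \subset G := normal_sub nMG.
Let sMK' : M \subset K' := sub_Stab sMG.
Let nKG' : G \subset 'N(K) := normal_norm nKG.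
Let nMG' : G \subset 'N(M) := normal_norm nMG.

Lemma emb_blocks : exists xs : 'I_m0 -> X, forall y, exists j, y \in porb M (xs j).
Proof.
have Bj (j : 'I_m0) : exists x, enum_val (cast_ord (esym cardB) j) = porb M x.
  by have /imsetP[x _ ->] := enum_valP (cast_ord (esym cardB) j); exists x.
have [xs hxs] := fin_all_exists Bj; exists xs => y.
have By : porb M y \in porbs M by apply: imset_f; rewrite inE.
exists (cast_ord cardB (enum_rank_in By (porb M y))).
by rewrite -hxs cast_ordK enum_rankK_in // porb_refl.
Qed.

Lemma rho_K x k : k \in K ->
  restr_perm (orbit ('P^*) M (porb K x)) (actperm ('P^*) k) = 1.
Proof.
move=> Kk; apply: mker; rewrite ker_restr_perm; apply/astabP => w /imsetP[m Mm ->].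
rewrite [X in X = _]/= apermE actpermE -!pimageE porb_norm ?(subsetP nKG') ?(subsetP sMG) //.
by rewrite porb_fix.
Qed.

Lemma rho_N x g : g \in K' -> actperm ('P^*) g \in 'N(orbit ('P^*) M (porb K x) | 'P).
Proof.
move=> K'g; rewrite inE; apply/andP; split; first by rewrite inE.
rewrite inE; apply/subsetP => w /imsetP[m Mm ->]; rewrite inE /= apermE actpermE.
rewrite -!pimageE porb_norm ?(subsetP nKG') ?(subsetP sMG) //.
rewrite porb_norm ?(subsetP nKG') ?(subsetP sK'G) //.
have : g (m x) \in porb M x.
  by rewrite -(StabP x K'g); apply: imset_f; apply/imsetP; exists m.
case/imsetP => m' Mm' ->; apply/imsetP; exists m' => //.
by rewrite -pimageE porb_norm ?(subsetP nKG') ?(subsetP sMG).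
Qed.

Lemma emb_block x : exists F : {ffun {perm {set X}} -> holomorph q},
  [/\ {in K' &, forall g h, F (restr_perm (orbit ('P^*) M (porb K x)) (actperm ('P^*) (g * h))) =
          F (restr_perm (orbit ('P^*) M (porb K x)) (actperm ('P^*) g)) *
          F (restr_perm (orbit ('P^*) M (porb K x)) (actperm ('P^*) h))},
      F 1 = 1 &
      {in K', forall g, F (restr_perm (orbit ('P^*) M (porb K x)) (actperm ('P^*) g)) = 1 ->
          forall y, y \in porb M x -> pimage g (porb K y) = porb K y}].
Proof.
set Om := orbit ('P^*) M (porb K x).
pose rho g := restr_perm Om (actperm ('P^*) g).
have rhoM : {in K' &, {morph rho : g h / g * h}}.
  move=> g h Kg Kh; rewrite /rho actpermM ?inE //.
  by rewrite (morphM (restr_perm_morphism Om)) ?rho_N.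
pose rhom := Morphism rhoM.
have Om0 : porb K x \in Om by exact: orbit_refl.
have rhoE g w : g \in K' -> w \in Om -> rho g w = pimage g w.
  by move=> Kg Ow; rewrite /rho restr_permE ?rho_N // actpermE.
have [L isoL] : exists L : {group holomorph q}, (rhom @* K') \isog L.
  apply: (@he_main _ q Om (rhom @* K')%G (rhom @* M)%G (porb K x) q_pr (cardOm x) Om0).
  - by move=> w /morphimP[g _ Kg ->]; apply: restr_perm_on.
  - exact: morphimS.
  - by apply: morphim_norms; apply: subset_trans sK'G nMG'.
  - apply/centsP => a /morphimP[u _ Mu ->] b /morphimP[v _ Mv ->].
    apply/commgP; rewrite -morphR ?(subsetP sMK') //=.
    by rewrite /rho rho_K // (subsetP derM) // mem_commg.
  - apply/setP => w; apply/imsetP/imsetP => [[c /morphimP[m _ Mm ->] ->]|[m Mm ->]].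
      by exists m => //; rewrite /= apermE rhoE ?(subsetP sMK').
    exists (rhom m); first by rewrite mem_morphim ?(subsetP sMK').
    by rewrite /= apermE rhoE ?(subsetP sMK').
have [psi injpsi impsi] := isogP isoL.
exists [ffun w => psi w]; split.
- move=> g h Kg Kh; rewrite !ffunE.
  have -> : restr_perm Om (actperm ('P^*) (g * h)) = rhom g * rhom h by rewrite -morphM.
  by rewrite morphM ?mem_morphim.
- by rewrite ffunE morph1.
- move=> g Kg; rewrite ffunE => psig y /imsetP[m Mm ->].
  have rg1 : rhom g = 1.
    apply: (injmP injpsi); rewrite ?mem_morphim ?group1 //.
    by rewrite morph1.
  have Oy : porb K (m x) \in Om.
    by apply/imsetP; exists m => //; rewrite -pimageE porb_norm ?(subsetP nKG') ?(subsetP sMG).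
  by rewrite -rhoE // [rho g]rg1 perm1.
Qed.

Lemma emb_main : exists F : {morphism K' >-> gpower (holomorph q) m0}, 'ker F = K.
Proof.
have [xs hxs] := emb_blocks.
have [Fs hFs] := fin_all_exists (fun j => emb_block (xs j)).
pose rho j g := restr_perm (orbit ('P^*) M (porb K (xs j))) (actperm ('P^*) g).
pose F g : gpower (holomorph q) m0 := [ffun j => Fs j (rho j g)].
have FM : {in K' &, {morph F : g h / g * h}}.
  move=> g h Kg Kh; apply/ffunP => j; rewrite mulg_ffun !ffunE.
  by have [h1 _ _] := hFs j; apply: h1.
exists (Morphism FM); apply/setP => g; apply/idP/idP.
  case/morphpreP => Kg /set1P /= Fg1.
  rewrite -StabK StabE inE (subsetP sK'G g Kg) /=; apply/forallP => y; apply/eqP.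
  have [j yj] := hxs y; have [_ _ h3] := hFs j.
  apply: (h3 g Kg _ y yj).
  by have := congr1 (fun u : gpower (holomorph q) m0 => u j) Fg1; rewrite ffunE oneg_ffun.
move=> Kg; have K'g : g \in K' by apply: (subsetP sMK'); apply: (subsetP sKM).
apply/morphpreP; split => //; apply/set1P; apply/ffunP => j.
rewrite /= ffunE oneg_ffun.
have [_ h2 _] := hFs j; rewrite -[RHS]h2; congr (Fs j _).
apply: mker; rewrite ker_restr_perm; apply/astabP => w /imsetP[m Mm ->].
rewrite [X in X = _]/= apermE actpermE -!pimageE porb_norm ?(subsetP nKG') ?(subsetP sMG) //.
by rewrite porb_fix.
Qed.


End Embed.

End GOrbs.



Lemma quo_embed (aT rT : finGroupType) (H K : {group aT}) (F : {morphism H >-> rT}) :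
  'ker F = K -> exists g : {morphism H / K >-> rT}, 'injm g /\ g @* (H / K) = F @* H.
Proof.
move=> kF; have eK : ('ker F)%G = K by apply: val_inj.
case: _ / eK; have [g injg gE] := first_isom F.
by exists g; split; rewrite ?gE.
Qed.

Section Split.
Variables (X : finType) (K M : {group {perm X}}) (d : nat).
Hypotheses (sKM : K \subset M) (nKM : M \subset 'N(K)) (cardK : forall y, #|porb K y| = d).

Lemma setact_porb m x : m \in M -> ('P^*)%act (porb K x) m = porb K (m x).
Proof. by move=> Mm; rewrite -pimageE porb_norm ?(subsetP nKM). Qed.

Lemma card_split x : #|porb M x| = (#|orbit ('P^*) M (porb K x)| * d)%N.
Proof.
set Om := orbit ('P^*) M (porb K x).
have sub : Om \subset porbs K.
  by apply/subsetP => B /imsetP[m Mm ->]; rewrite setact_porb //; apply: imset_f; rewrite inE.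
have pK := porbs_partition K.
have part : partition Om (porb M x).
  apply/and3P; split.
  - rewrite /cover; apply/eqP/setP => y; apply/bigcupP/idP.
      case=> B /imsetP[m Mm ->]; rewrite setact_porb // => /imsetP[k Kk ->].
      by apply/imsetP; exists (m * k); rewrite ?permM // groupM // (subsetP sKM k Kk).
    case/imsetP => m Mm ->; exists (porb K (m x)); last exact: porb_refl.
    by apply/imsetP; exists m => //; rewrite setact_porb.
  - by case/and3P: pK => _ tK _; apply: trivIsetS tK.
  - apply/negP => /imsetP[m Mm e].
    by have := porb_refl K (m x); rewrite -setact_porb // -e inE.
rewrite (card_partition part) -sum_nat_const; apply: eq_bigr => B /imsetP[m Mm ->].
by rewrite setact_porb.
Qed.

Lemma dvd_split x : #|orbit ('P^*) M (porb K x)| %| #|M : K|.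
Proof.
rewrite card_orbit.
have sKS : K \subset 'C_M[porb K x | 'P^*].
  apply/subsetP => k Kk; rewrite inE (subsetP sKM) //=; apply/astab1P.
  by rewrite -pimageE porb_fix.
rewrite -(Lagrange_index (subsetIl M _) sKS); exact: dvdn_mulr.
Qed.

End Split.

Section Step.
Variables (X : finType) (G : {group {perm X}}) (x0 : X).
Hypotheses (transG : [transitive G, on [set: X] | 'P]) (solG : solvable G)
  (hsq : forall q, prime q -> ~~ (q ^ 2 %| #|X|)).

Lemma step (K : {group {perm X}}) d :
  K <| G -> Stab G K = K -> (forall x, #|porb K x| = d) -> K :!=: G ->
  exists q, exists T K' : {group {perm X}},
   [/\ prime q, ~~ (q %| d), (forall x, #|porb K' x| = d * q)%N, K' <| G & Stab G K' = K'] /\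
   [/\ [/\ K \subset T, T \subset K' & T <| G], Stab G T = K',
       forall m0, #|porbs K'| = m0 -> exists L : {group gpower (holomorph q) m0}, K' / K \isog L,
       q %| #|K' / K| & q.-Sylow(K' / K) (T / K)].
Proof.
move=> nKG StabK cardK neKG.
have sKG := normal_sub nKG; have nKG' := normal_norm nKG.
have solQ := quotient_sol K solG.
have ntQ : G / K :!=: 1.
  by apply: contra neKG => /eqP Q1; rewrite eqEsubset sKG /= -(quotient_sub1 nKG') Q1.
have [Mb minMb sMbQ] := minnormal_exists ntQ (normG (G / K)).
have [nMbQ ntMb abMb] := minnormal_solvable minMb sMbQ solQ.
set q := pdiv #|Mb|.
have q_pr : prime q by apply: pdiv_prime; rewrite cardG_gt1.
have qgMb : q.-group Mb := abelem_pgroup abMb.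
have cMb : abelian Mb := abelem_abelian abMb.
pose M := (coset K @*^-1 Mb)%G.
have sKM : K \subset M by rewrite -{1}(ker_coset K) ker_sub_pre.
have MK : M / K = Mb := cosetpreK Mb.
have nMG : M <| G by rewrite -(quotientGK nKG) cosetpre_normal /normal sMbQ nMbQ.
have sMG := normal_sub nMG; have nMG' := normal_norm nMG.
have nKM : M \subset 'N(K) := subset_trans sMG nKG'.
have derM : M^`(1) \subset K by apply: der1_min => //; rewrite MK.
have neMK : ~~ (M \subset K).
  by apply: contra ntMb => sMK; rewrite -MK -subG1 quotient_sub1.
have d_gt0 : 0 < d by rewrite -(cardK x0) card_gt0; apply/set0Pn; exists x0; exact: porb_refl.
pose Om x := orbit ('P^*) M (porb K x).
have csplit x : #|porb M x| = (#|Om x| * d)%N := card_split sKM nKM cardK x.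
have cOm x : #|Om x| = #|Om x0|.
  apply/eqP; rewrite -(eqn_pmul2r d_gt0) -!csplit.
  by rewrite (porb_card transG x0 x nMG').
have [k ck] : {k | #|M / K| = (q ^ k)%N} by apply: p_natP; rewrite MK.
have [a _ ca] : exists2 a, a <= k & #|Om x0| = (q ^ a)%N.
  by apply/dvdn_pfactor => //; rewrite -ck card_quotient // dvd_split.
have a_gt0 : 0 < a.
  rewrite lt0n; apply/negP => /eqP a0; move: ca; rewrite a0 expn0 => c1.
  apply: (negP neMK); rewrite -StabK; apply/subsetP => m Mm.
  rewrite StabE inE (subsetP sMG) //=; apply/forallP => y.
  have eMK : porb M y = porb K y.
    apply/eqP; rewrite eq_sym eqEcard csplit cOm c1 mul1n cardK leqnn andbT.
    apply/subsetP => z /imsetP[h Kh ->]; apply/imsetP; exists h => //.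
    exact: (subsetP sKM).
  by rewrite -eMK porb_fix.
have dvdN : (d * q ^ a %| #|X|)%N.
  by rewrite -(card_porbs transG x0 nMG') csplit ca mulnC dvdn_mull.
have a1 : a = 1%N.
  have : ~~ (1 < a).
    apply/negP => a2; move: (hsq q_pr) => /negP nq; apply: nq; apply: dvdn_trans dvdN.
    by apply: dvdn_mull; rewrite dvdn_Pexp2l // prime_gt1.
  by case: (a) a_gt0 => [|[|]].
have cOmq x : #|Om x| = q by rewrite cOm ca a1 expn1.
have ndq : ~~ (q %| d).
  apply/negP => qd; move: (hsq q_pr) => /negP nq; apply: nq; apply: dvdn_trans dvdN.
  by rewrite a1 expn1 -mulnn dvdn_mul.
pose K' := [group of Stab G M].
have sMK' : M \subset K' := sub_Stab sMG.
have nK'G : K' <| G := Stab_normal (normal_norm nMG).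
have sK'G := normal_sub nK'G.
have StabK' : Stab G K' = K' := Stab_between sMK' (subxx _).
have porbK' x : porb K' x = porb M x := porb_between x sMK' (subxx _).
have porbsK' : porbs K' = porbs M by apply: eq_imset => x; exact: porbK'.
have emb m0 : #|porbs M| = m0 -> exists g : {morphism K' / K >-> gpower (holomorph q) m0},
    'injm g.
  move=> cm0; have [F kF] := emb_main nKG StabK nMG sKM derM q_pr cOmq cm0.
  by have [g [injg _]] := quo_embed kF; exists g.
have sKK' : K \subset K' := subset_trans sKM sMK'.
have nKK' : K <| K' by rewrite /normal sKK' (subset_trans sK'G nKG').
pose O := 'O_q(K' / K).
pose T := (coset K @*^-1 O)%G.
have TK : T / K = O := cosetpreK O.
have nOG : O <| G / K.
  exact: char_normal_trans (pcore_char _ _) (quotient_normal K nK'G).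
have sMbK' : Mb \subset K' / K by rewrite -MK quotientS.
have sMT : M \subset T.
  apply: morphpreS; apply: pcore_max => //.
  by rewrite /normal sMbK' (subset_trans (quotientS K sK'G) nMbQ).
have sTK' : T \subset K'.
  by apply: subset_trans (morphpreS _ (pcore_sub _ _)) _; rewrite (quotientGK nKK').
exists q, T, K'; split; first split => //.
- by move=> x; rewrite porbK' csplit cOmq mulnC.
split.
- split; first exact: subset_trans sKM sMT.
    exact: sTK'.
  by rewrite -(quotientGK nKG) cosetpre_normal.
- by rewrite (Stab_between sMT sTK').
- move=> m0; rewrite porbsK' => cm0; have [g injg] := emb m0 cm0.
  by exists (g @* (K' / K))%G; apply: sub_isog.
- by apply: dvdn_trans (cardSg sMbK'); apply: pdiv_dvd.
- have [g injg] := emb _ (erefl _).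
  rewrite TK -(injm_pHall injg) ?pcore_sub // injm_pcore //.
  exact: gpower_sylow.
Qed.

End Step.


Section Main.
Variables (X : finType) (G : {group {perm X}}) (x0 : X).
Hypotheses (transG : [transitive G, on [set: X] | 'P]) (solG : solvable G).
Variables (n : nat) (p : 'I_n -> nat) (i0 : 'I_n).
Hypotheses (p_prime : forall i, prime (p i)) (p_inj : injective p)
  (cardX : #|X| = (\prod_(i < n) p i)%N).

Let hsq r : prime r -> ~~ (r ^ 2 %| #|X|)%N.
Proof. by rewrite cardX; apply: sqfree_prodp. Qed.

Definition Kinv (H : {group {perm X}}) (d : nat) :=
  [/\ H <| G, Stab G H = H & forall x, #|porb H x| = d].

Definition stepP (q : nat) (K0 T1 K1 : {group {perm X}}) :=
  [/\ K0 \subset T1 /\ T1 \subset K1,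
      [/\ forall m0, #|porbs K1| = m0 -> exists L : {group gpower (holomorph q) m0}, K1 / K0 \isog L,
          q %| #|K1 / K0| & q.-Sylow(K1 / K0) (T1 / K0)]
    & Stab G T1 = K1].

Definition Inv (i : nat) := exists (s : nat -> 'I_n) (K T : nat -> {group {perm X}}),
  [/\ K 0%N :=: 1,
      forall j1 j2, j1 < i -> j2 < i -> s j1 = s j2 -> j1 = j2,
      forall j, j <= i -> Kinv (K j) (\prod_(l < j) p (s l))%N,
      forall j, 0 < j <= i -> T j <| G
    & forall j, j < i -> stepP (p (s j)) (K j) (T j.+1) (K j.+1)].

Lemma porb1 x : porb 1 x = [set x] :> {set X}.
Proof. by rewrite /porb imset_set1 perm1. Qed.

Lemma Inv0 : Inv 0.
Proof.
exists (fun _ => i0), (fun _ => 1%G), (fun _ => 1%G); split => //.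
move=> j; rewrite leqn0 => /eqP -> ; split; first exact: normal1.
  apply/eqP; rewrite eqEsubset sub1G andbT StabE; apply/subsetP => g.
  rewrite inE => /andP[_ /forallP fg]; apply/set1P; apply/permP => x.
  have := fg x; rewrite porb1 /pimage imset_set1 perm1 => /eqP /set1_inj.
  done.
by move=> x; rewrite porb1 cards1 big_ord0.
by move=> j _; exact: normal1.
Qed.

Lemma InvS i : i < n -> Inv i -> Inv i.+1.
Proof.
move=> lt_in [s [K [T [K01 sinj hK hT hS]]]].
set d := (\prod_(l < i) p (s l))%N.
have [nKG StabK cK] := hK i (leqnn i).
have neKG : K i :!=: G.
  apply/negP => /eqP eKG.
  have := cK x0; rewrite eKG.
  have -> : porb G x0 = [set: X].
    by apply/setP => y; rewrite inE porbE (atransP transG) ?inE.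
  rewrite cardsT cardX => e.
  by have := prod_lt p_prime lt_in sinj; rewrite e ltnn.
have [q [T' [K' [[q_pr ndq cK' nK'G StabK'] stp]]]] := step x0 transG solG hsq nKG StabK cK neKG.
have qN : (q %| \prod_(k < n) p k)%N.
  rewrite -cardX -(card_porbs transG x0 (normal_norm nK'G)) cK'.
  by apply: dvdn_mull; apply: dvdn_mull.
have [k qk] := prime_dvd_prodp p_prime q_pr qN.
have kfresh l : l < i -> s l != k.
  move=> lt_li; apply/negP => /eqP skl; apply: (negP ndq).
  rewrite qk -skl /d (bigD1 (Ordinal lt_li)) //=; exact: dvdn_mulr.
pose s' j := if j == i then k else s j.
pose K2 j := if j == i.+1 then K' else K j.
pose T2 j := if j == i.+1 then T' else T j.
have s'E j : j < i -> s' j = s j by move=> lt; rewrite /s' ifN // ltn_eqF.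
have prodE j : j <= i -> (\prod_(l < j) p (s' l))%N = (\prod_(l < j) p (s l))%N.
  by move=> le; apply: eq_bigr => l _; rewrite s'E // (leq_trans (ltn_ord l)).
have s'i : s' i = k by rewrite /s' eqxx.
exists s', K2, T2; split.
- by rewrite /K2.
- move=> j1 j2; rewrite !ltnS [j1 <= i]leq_eqVlt [j2 <= i]leq_eqVlt => /orP[/eqP->|l1] /orP[/eqP->|l2] //.
  + by rewrite s'i s'E // => e; have := kfresh _ l2; rewrite e eqxx.
  + by rewrite s'i s'E // => e; have := kfresh _ l1; rewrite -e eqxx.
  + by rewrite !s'E //; apply: sinj.
- move=> j; rewrite leq_eqVlt => /orP[/eqP->|lj].
    rewrite /K2 eqxx big_ord_recr /= prodE // s'i -qk.
    by split.
  by rewrite /K2 ltn_eqF // prodE //; apply: hK.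
- move=> j /andP[j0]; rewrite leq_eqVlt => /orP[/eqP->|lj].
    by rewrite /T2 eqxx; case: stp => [[_ _ ->]].
  by rewrite /T2 ltn_eqF //; apply: hT; rewrite j0.
- move=> j; rewrite ltnS leq_eqVlt => /orP[/eqP->|lj].
    rewrite s'i /K2 /T2 eqxx ltn_eqF // -qk.
    case: stp => [[sKT sTK _] hST hi1 hi2 hi3]; split => //.
  have e1 : (j == i.+1) = false by apply: ltn_eqF; apply: ltn_trans lj _.
  have e2 : (j.+1 == i.+1) = false by rewrite eqSS; apply: ltn_eqF.
  by rewrite s'E // /K2 /T2 e1 e2; apply: hS.
Qed.

Lemma Inv_all i : i <= n -> Inv i.
Proof.
elim: i => [_|i IH lt_in]; first exact: Inv0.
by apply: InvS => //; apply: IH; apply: ltnW.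
Qed.

End Main.


Theorem theorem3p6 (n : nat) (p : 'I_n -> nat)
    (p_prime : forall i, prime (p i)) (p_inj : injective p)
    (X : finType) (cardX : #|X| = (\prod_(i < n) p i)%N)
    (G : {group {perm X}})
    (solG : solvable G) (transG : [transitive G, on [set: X] | 'P]) :
  exists (sigma : {perm 'I_n}) (K T : nat -> {group {perm X}}),
    [/\ K 0%N :=: 1, K n :=: G,
        forall i : nat, (i <= n)%N -> K i <| G,
        forall i : nat, (1 <= i <= n)%N -> T i <| G
      & forall i : 'I_n,
        let q := p (sigma i) in
        let m := ((\prod_(j < n) p j) %/ (\prod_(j < n | (j <= i)%N) p (sigma j)))%N in
        [/\ K i \subset T i.+1 /\ T i.+1 \subset K i.+1,
            (* (i) *)
            [/\ exists L : {group gpower (holomorph q) m}, (K i.+1 / K i) \isog L,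
                q %| #|K i.+1 / K i|
              & q.-Sylow(K i.+1 / K i) (T i.+1 / K i)],
            (* (ii) *)
            K i.+1 :=: [set g in G | [forall x, pimage g (porb (T i.+1) x)
                                              == porb (T i.+1) x]]
          & (* (iii) *)
            (system_of_imprimitivity G (porbs (K i.+1)) /\
             #|porbs (K i.+1)| = m)]].
Proof.
have N_gt0 : (0 < \prod_(i < n) p i)%N by apply: prodp_gt0.
have [x0 _] : exists x0 : X, true.
  by have /card_gt0P[x0 _] : (0 < #|X|)%N by rewrite cardX.
case: n p p_prime p_inj cardX N_gt0 => [|n'] p p_prime p_inj cardX N_gt0.
  have G1 : G :=: 1.
    apply/eqP; rewrite eqEsubset sub1G andbT; apply/subsetP => g _; apply/set1P.
    apply/permP => x; rewrite perm1; apply/eqP; rewrite -(inj_eq (@perm_inj _ g^-1)) permK.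
    have : (#|X| <= 1)%N by rewrite cardX big_ord0.
    by move/card_le1_eqP => h; apply/eqP; apply: h.
  exists 1, (fun _ => G), (fun _ => G); split => //.
  by case.
have [s [K [T [K01 sinj hK hT hS]]]] := Inv_all x0 transG solG ord0 p_prime p_inj cardX (leqnn _).
set n := n'.+1 in p p_prime p_inj cardX N_gt0 s K T K01 sinj hK hT hS *.
have finj : injective (fun j : 'I_n => s j).
  by move=> a b e; apply: val_inj; apply: sinj (ltn_ord a) (ltn_ord b) e.
pose sigma := perm finj.
have sigE j : sigma j = s j by rewrite permE.
have prodE : (\prod_(l < n) p (s l))%N = (\prod_(i < n) p i)%N.
  rewrite [RHS](reindex_inj finj) /=; apply: eq_bigr => l _; done.
exists sigma, K, T; split => //.
- have [nKG StabK cK] := hK n (leqnn n).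
  have porbT x : porb (K n) x = [set: X].
    by apply/eqP; rewrite eqEcard subsetT cardsT cK prodE cardX leqnn.
  apply/eqP; rewrite eqEsubset normal_sub //= -{1}StabK StabE.
  apply/subsetP => g Gg; rewrite inE Gg; apply/forallP => x; rewrite porbT.
  by rewrite eqEcard subsetT card_pimage leqnn.
- by move=> i /hK [].
move=> i q m.
have [[sKT sTK] [hi1 hi2 hi3] hii] := hS i (ltn_ord i).
have [nK1G _ cK1] := hK i.+1 (ltn_ord i).
have cm : #|porbs (K i.+1)| = m.
  rewrite /m -cardX -(card_porbs transG x0 (normal_norm nK1G)) cK1.
  have -> : (\prod_(j < n | (j <= i)%N) p (sigma j))%N = (\prod_(l < i.+1) p (s l))%N.
    rewrite (big_ord_widen n (fun l => p (s l)) (ltn_ord i)).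
    by apply: eq_bigr => j _; rewrite sigE.
  by rewrite mulnK // prodn_gt0 // => l; apply: prime_gt0.
rewrite /q sigE; split => //.
- split => //; exact: hi1.
- by rewrite -StabE hii.
- by split => //; apply: porbs_sys; apply: normal_norm.
Qed.
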